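(* For each $K\in\mathbb{N}$ there exist an alphabet $\mathcal{A}$, a set $\mathcal{M}$ of $K$ probability measures on $\mathcal{A}^\infty$ and $\mu\in\mathcal{M}$ such that, if $w$ is the uniform prior on $\mathcal{M}$ and $\xi$ the corresponding Bayes mixture, then $\mathbb{E}_\mu C_\infty>\frac12\ln^2K-1$.
   Context: $\mathcal{A}^\infty$ carries the $\sigma$-algebra generated by cylinders $\Gamma_x=\{x\omega\}$; for a measure $\rho$, $\rho(x):=\rho(\Gamma_x)$, $\rho(y|x):=\rho(xy)/\rho(x)$. Bayes mixture: $\xi(A):=\sum_{\nu\in\mathcal{M}}w_\nu\nu(A)$ with $w_\nu=1/K$; posterior $w_\nu(x):=w_\nu\nu(x)/\xi(x)$. Logarithms are natural. For a finite string $x$, $d_x(\nu,\xi):=\sum_{a}\nu(a|x)\ln\frac{\nu(a|x)}{\xi(a|x)}$. For $\omega\in\mathcal{A}^\infty$, $c_t(\omega):=\sum_{\nu\in\mathcal{M}}w_\nu(\omega_{<t})\,d_{\omega_{<t}}(\nu,\xi)$ and $C_\infty:=\sum_{t\ge1}c_t$. *)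

(* Defs.v *)
From HB Require Import structures.
From mathcomp Require Import all_boot all_order all_algebra.
From mathcomp Require Import all_classical all_reals all_analysis.
Unset Printing Implicit Defensive.
Import Order.TTheory GRing.Theory Num.Theory.
Import numFieldNormedType.Exports.
Local Open Scope classical_set_scope.
Local Open Scope ring_scope.

(* The space A^oo of infinite sequences over a (finite, nonempty) alphabet A;
   a0 is only used to give the type its (required) pointed structure. *)
Definition seqspace {A : finType} (a0 : A) : Type := nat -> A.
HB.instance Definition _ (A : finType) (a0 : A) :=
  Choice.on (seqspace a0).
HB.instance Definition _ (A : finType) (a0 : A) :=
  isPointed.Build (seqspace a0) (fun _ => a0).

Definition cyl {A : finType} (a0 : A) (x : seq A) : set (seqspace a0) :=
  [set w | forall i, (i < size x)%N -> w i = nth a0 x i].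

Definition cylinders {A : finType} (a0 : A) : set (set (seqspace a0)) :=
  [set C | exists x : seq A, C = cyl a0 x].

Definition Ainf {A : finType} (a0 : A) := g_sigma_algebraType (cylinders a0).

(* The first n letters omega_{<n+1} of omega. *)
Definition prefix {A : finType} {a0 : A} (w : seqspace a0) (n : nat) : seq A :=
  [seq w i | i <- iota 0 n].

Section BayesDefs.
Context {R : realType} {A : finType} {a0 : A} {K : nat}
  (nu : 'I_K -> probability (Ainf a0) R).

Definition mcyl (i : 'I_K) (x : seq A) : R := fine (nu i (cyl a0 x)).

Definition wK : R := K%:R^-1.
Definition xi (x : seq A) : R := \sum_(i < K) wK * mcyl i x.

Definition ncond (i : 'I_K) (a : A) (x : seq A) : R :=
  mcyl i (rcons x a) / mcyl i x.
Definition xicond (a : A) (x : seq A) : R := xi (rcons x a) / xi x.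

Definition post (i : 'I_K) (x : seq A) : R := wK * mcyl i x / xi x.

Definition dKL (i : 'I_K) (x : seq A) : R :=
  \sum_(a : A) ncond i a x * ln (ncond i a x / xicond a x).

(* c_t(omega) for t = n+1, i.e. using omega_{<t} = prefix omega n *)
Definition cterm (n : nat) (w : seqspace a0) : R :=
  \sum_(i < K) post i (prefix w n) * dKL i (prefix w n).

Definition Cinf (w : seqspace a0) : \bar R :=
  (\sum_(0 <= n <oo) (cterm n w)%:E)%E.

End BayesDefs.

(* Main.v *)
Require Import Defs.
From HB Require Import structures.
From mathcomp Require Import all_boot all_order all_algebra.
From mathcomp Require Import all_classical all_reals all_analysis.
From mathcomp Require Import measurable_realfun.
From mathcomp Require Import ring lra zify.
Import Order.TTheory GRing.Theory Num.Theory.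
Local Open Scope ring_scope.
Local Open Scope classical_set_scope.

Section S.
Variables (A : finType) (a0 : A).

Lemma cyl_meas (x : seq A) : measurable (cyl a0 x : set (Ainf a0)).
Proof. apply: sub_sigma_algebra. by exists x. Qed.

Lemma size_prefix (w : seqspace a0) n : size (@Defs.prefix _ a0 w n) = n.
Proof. by rewrite /Defs.prefix size_map size_iota. Qed.

Lemma nth_prefix (w : seqspace a0) n i : (i < n)%N -> nth a0 (@Defs.prefix _ a0 w n) i = w i.
Proof. by move=> lt; rewrite /Defs.prefix (nth_map 0%N) ?size_iota // nth_iota. Qed.

Lemma cyl_prefix (w : seqspace a0) (x : seq A) :
  cyl a0 x w <-> Defs.prefix w (size x) = x.
Proof.
split.
- move=> h; apply: (@eq_from_nth _ a0); first by rewrite size_prefix.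
  by move=> i; rewrite size_prefix => lt; rewrite nth_prefix // h.
- by move=> <- i; rewrite size_prefix => lt; rewrite nth_prefix.
Qed.

Lemma prefix_meas d (X : measurableType d) (G : seq A -> X) n :
  measurable_fun setT (fun w : Ainf a0 => G (@Defs.prefix _ a0 w n)).
Proof.
move=> _ B mB; rewrite setTI.
pose F (k : nat) : set (Ainf a0) := match @unpickle (seq A) k with
  | Some x => cyl a0 x `&` [set _ | size x = n /\ B (G x)]
  | None => set0 end.
have -> : (fun w : Ainf a0 => G (@Defs.prefix _ a0 w n)) @^-1` B = \bigcup_k F k.
  apply/seteqP; split => w /=.
  - move=> Bw; exists (pickle (@Defs.prefix _ a0 w n)) => //.
    rewrite /F pickleK; split; first by apply/cyl_prefix; rewrite size_prefix.
    by rewrite size_prefix.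
  - case=> k _; rewrite /F; case: (unpickle k) => // x [/cyl_prefix].
    by move=> h [sx Bx]; rewrite -sx h.
apply: bigcupT_measurable => k; rewrite /F; case: (unpickle k) => [x|//].
have [P|nP] := pselect (size x = n /\ B (G x)).
- have -> : [set _ : Ainf a0 | size x = n /\ B (G x)] = setT by apply/seteqP; split.
  by rewrite setIT; apply: cyl_meas.
- have -> : [set _ : Ainf a0 | size x = n /\ B (G x)] = set0 by apply/seteqP; split.
  by rewrite setI0.
Qed.
End S.

Section G.
Variable R : realType.
Variables (A : finType) (a0 : A) (K : nat) (HK : (0 < K)%N).
Variable s : 'I_K -> seqspace a0.
Definition pd (w : seqspace a0) : probability (Ainf a0) R := \d_(w : Ainf a0).
Let nu i := pd (s i).

Definition consq i (x : seq A) := @Defs.prefix _ a0 (s i) (size x) == x.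
Definition mm (x : seq A) : R := \sum_i (consq i x)%:R.

Lemma mcylE i x : mcyl nu i x = (consq i x)%:R.
Proof.
rewrite /mcyl /nu /pd /= indicE /consq.
have [h|h] := boolP (Defs.prefix (s i) (size x) == x).
- by rewrite mem_set //; apply/cyl_prefix; apply/eqP.
- by rewrite memNset //= => /cyl_prefix /eqP; rewrite (negbTE h).
Qed.

Lemma prefixS (w : seqspace a0) n :
  @Defs.prefix _ a0 w n.+1 = rcons (@Defs.prefix _ a0 w n) (w n).
Proof. by rewrite /Defs.prefix -addn1 iotaD map_cat /= cats1. Qed.

Lemma consR i x a : consq i (rcons x a) = consq i x && (s i (size x) == a).
Proof. by rewrite /consq size_rcons prefixS eqseq_rcons. Qed.

Lemma wK_neq0 : (@wK R K) != 0.
Proof. by rewrite /wK invr_eq0 pnatr_eq0 -lt0n. Qed.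

Lemma xiE x : xi nu x = @wK R K * mm x.
Proof. by rewrite /xi /mm mulr_sumr; apply: eq_bigr => i _; rewrite mcylE. Qed.

Lemma mm_ge0 x : 0 <= mm x.
Proof. by apply: sumr_ge0 => i _; rewrite ler0n. Qed.

Lemma mmR_le x a : mm (rcons x a) <= mm x.
Proof.
apply: ler_sum => i _; rewrite consR ler_nat.
by case: (consq i x); case: (_ == _).
Qed.

Lemma mmR_ge1 i x : consq i x -> 1 <= mm (rcons x (s i (size x))).
Proof.
move=> ci; rewrite /mm (bigD1 i) //= consR ci eqxx /= lerDl.
by apply: sumr_ge0 => j _; rewrite ler0n.
Qed.

Lemma term_eq i x :
  post nu i x * dKL nu i x = (consq i x)%:R / mm x * ln (mm x / mm (rcons x (s i (size x)))).
Proof.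
rewrite /post xiE mcylE.
have [ci|nci] := boolP (consq i x); last by rewrite /= !(mulr0, mul0r).
have m1 := @mmR_ge1 i x ci.
have mpos : 0 < mm x by apply: (lt_le_trans ltr01); apply: (le_trans m1); exact: mmR_le.
rewrite /= mulr1 invfM mulrA mulfV ?wK_neq0 // mul1r; congr (_ * _).
rewrite /dKL (bigD1 (s i (size x))) //= big1 ?addr0.
  rewrite /ncond /xicond !mcylE !xiE consR ci eqxx /= divr1 mul1r.
  by rewrite -mulf_div divff ?wK_neq0 // mul1r div1r invf_div.
move=> a na; rewrite /ncond !mcylE consR ci /=.
by rewrite eq_sym (negbTE na) /= mul0r mul0r.
Qed.

Lemma term_ge0 i x : 0 <= post nu i x * dKL nu i x.
Proof.
rewrite term_eq.
have [ci|nci] := boolP (consq i x); last by rewrite /= !mul0r.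
have m1 := @mmR_ge1 i x ci.
have mpos : 0 < mm x by apply: (lt_le_trans ltr01); apply: (le_trans m1); exact: mmR_le.
apply: mulr_ge0; first by apply: divr_ge0; [rewrite /= ler01 | exact: ltW].
apply: ln_ge0; rewrite ler_pdivlMr ?mul1r; last by apply: (lt_le_trans ltr01).
exact: mmR_le.
Qed.

Lemma cterm_ge0 n w : 0 <= cterm nu n w.
Proof. by apply: sumr_ge0 => i _; apply: term_ge0. Qed.

Lemma Cinf_meas : measurable_fun [set: Ainf a0] (fun w : Ainf a0 => Cinf nu w).
Proof.
rewrite /Cinf.
apply: (@ge0_emeasurable_sum _ (Ainf a0) R setT (fun n w => (cterm nu n w)%:E) xpredT).
- by move=> k x _ _; rewrite lee_fin cterm_ge0.
- move=> k _; apply: measurableT_comp => //.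
  exact: (@prefix_meas A a0 _ R (fun x => \sum_(i < K) post nu i x * dKL nu i x) k).
Qed.

End G.
Section A.
Variable R : realType.

Lemma ln_le_sub1 (x : R) : 0 < x -> ln x <= x - 1.
Proof.
move=> x0; have := @le_ln1Dx R (x - 1); rewrite (_ : 1 + (x - 1) = x); last by ring.
by apply; lra.
Qed.

Definition cc (M : R) := (ln M + (M - 1) * ln (M / (M - 1))) / M.

Lemma step (M : R) : 3 <= M ->
  (ln M ^+ 2 - ln (M - 1) ^+ 2) / 2 <= cc M.
Proof.
move=> M3.
have M0 : 0 < M by lra.
have M10 : 0 < M - 1 by lra.
set L := ln M.
have dE : ln (M / (M - 1)) = L - ln (M - 1) by rewrite ln_div ?posrE.
set d := ln (M / (M - 1)).
have hd1 : d <= 1 / (M - 1).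
  have := ln_le_sub1 _ (divr_gt0 M0 M10).
  have -> : M / (M - 1) - 1 = 1 / (M - 1) by field; lra.
  by [].
have hd2 : 1 / M <= d.
  have := ln_le_sub1 _ (divr_gt0 M10 M0).
  have -> : ln ((M - 1) / M) = - d by rewrite /d -lnV ?posrE ?divr_gt0 // invf_div.
  have -> : (M - 1) / M - 1 = - (1 / M) by field; lra.
  lra.
have L0 : 0 <= L by apply: ln_ge0; lra.
set sq := Num.sqrt M.
have sq0 : 0 <= sq by apply: sqrtr_ge0.
have sqM : sq * sq = M by rewrite -expr2 sqr_sqrtr //; lra.
have hL : L <= 2 * (sq - 1).
  have sqp : 0 < sq by rewrite sqrtr_gt0.
  have := ln_le_sub1 _ sqp.
  have -> : L = ln sq *+ 2 by rewrite /L -lnXn // expr2 sqM.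
  rewrite mulr2n; lra.
have Md1 : 1 <= M * d.
  have := ler_wpM2l (ltW M0) hd2; rewrite mulrA mulr1 mulfV ?gt_eqF //.
have Md2 : (M - 1) * d <= 1.
  have := ler_wpM2l (ltW M10) hd1; rewrite mulrA mulr1 mulfV ?gt_eqF //.
have s17 : 17 / 10 <= sq by nra.
have p3 : 0 <= sq * sq * sq - sq * sq - sq / 2 - 1 / 2.
  have : 0 <= (sq - 17/10) * (sq * sq + 7/10 * sq + 7/10) by apply: mulr_ge0; nra.
  nra.
have hC1 : L * M <= 2 * (sq - 1) * M by apply: ler_wpM2r; lra.
have hC2 : 2 * (sq - 1) * M <= (M - 1) * (M - 1 / 2).
  rewrite -sqM.
  have : 0 <= (sq - 1) * (sq * sq * sq - sq * sq - sq / 2 - 1 / 2) by apply: mulr_ge0; lra.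
  nra.
have hC : L * M <= (M - 1) * (M - 1 / 2) by lra.
have e1 : (M * d - 1) * (M - 1) <= 1.
  have := ler_wpM2l (ltW M0) Md2.
  have -> : (M * d - 1) * (M - 1) = M * ((M - 1) * d) - (M - 1) by ring.
  lra.
have hA : L * (M * d - 1) * (M - 1) <= L.
  have := ler_wpM2l L0 e1. rewrite mulr1 mulrA. by [].
rewrite /cc -/d.
have -> : ln (M - 1) = L - d by rewrite /d dE; ring.
rewrite ler_pdivlMr //.
have hB : (M - 1) * (1 / M) + M * (1/M) * (1/M) / 2 <= (M - 1) * d + M * d * d / 2.
  have h0 : 0 <= 1 / M by rewrite divr_ge0 //; lra.
  have q1 : 0 <= (M - 1) * (d - 1 / M) by apply: mulr_ge0; lra.
  have q2 : 0 <= M * ((d - 1 / M) * (d + 1 / M)) by apply: mulr_ge0; [lra | apply: mulr_ge0; lra].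
  nra.
have hB' : (M - 1) * (1 / M) + M * (1/M) * (1/M) / 2 = (M - 1 / 2) / M by field; lra.
rewrite hB' in hB.
have hC' : L / (M - 1) <= (M - 1 / 2) / M.
  rewrite ler_pdivrMr // mulrAC ler_pdivlMr //; lra.
have hA' : L * (M * d - 1) <= L / (M - 1).
  rewrite ler_pdivlMr //; lra.
rewrite -/L.
have -> : (L ^+ 2 - (L - d) ^+ 2) / 2 * M = L * (M * d - 1) + L - M * d * d / 2 by field.
move: hA' hB hC'.
set X := L * (M * d - 1). set Y := M * d * d / 2. set Z := L / (M - 1). set W := (M - 1) * d.
lra.
Qed.

Lemma sumc k : ln (k.+1%:R : R) ^+ 2 / 2 - 1 / 2 <= \sum_(i < k) cc (i.+2)%:R.
Proof.
elim: k => [|k IH]; first by rewrite big_ord0 ln1 expr2 mul0r mul0r; lra.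
rewrite big_ord_recr /=.
case: k IH => [|k] IH.
  rewrite big_ord0 add0r /cc.
  have -> : ((2%:R : R) - 1) = 1 by rewrite -natr1 addrK.
  rewrite divr1 mul1r.
  have l0 : 0 <= ln (2%:R : R) by apply: ln_ge0; rewrite ler1n.
  have l1 : ln (2%:R : R) <= 1 by have := ln_le_sub1 (2%:R) (ltr0Sn _ _); lra.
  rewrite mul1r; move: l0 l1; set l := ln _ => l0 l1.
  have h2 : l ^+ 2 <= l by rewrite expr2; nra.
  have -> : (l + l) / 2 = l by field.
  move: h2; set q := l ^+ 2; lra.
have := @step (k.+3%:R).
have -> : (k.+3%:R : R) - 1 = k.+2%:R by rewrite -natr1 addrK.
move=> h; have := h (ler_nat _ 3 _); lra.
Qed.
End A.

Section F.
Variable R : realType.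
Variable k : nat.
Definition sn (i : nat) : seqspace false := fun t => (t == i)%N.
Definition ss (i : 'I_k.+1) : seqspace false := sn i.

Lemma cntge N n : \sum_(i < N) ((n <= i)%N)%:R = (N - n)%:R :> R.
Proof.
elim: N => [|N IH]; first by rewrite big_ord0 sub0n.
rewrite big_ord_recr /= IH -natrD; congr (_%:R).
case: (leqP n N) => h; first by rewrite addn1 subSn.
by rewrite addn0; lia.
Qed.

Lemma cnteq N n : \sum_(i < N) ((n == nat_of_ord i))%:R = (n < N)%:R :> R.
Proof.
elim: N => [|N IH]; first by rewrite big_ord0.
rewrite big_ord_recr /= IH -natrD; congr (_%:R).
by rewrite ltnS; case: (ltngtP n N).
Qed.

Local Notation S := (ss).
Local Notation cq := (consq bool false k.+1 ss).
Local Notation mq := (mm R bool false k.+1 ss).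
Local Notation pre := (@Defs.prefix bool false).

Lemma prefix_sn_eq i j n : (pre (sn i) n == pre (sn j) n) = 
  [forall t : 'I_n, (t == i :> nat) == (t == j :> nat)].
Proof.
apply/eqP/forallP.
- move=> h t; have := congr1 (fun x => nth false x t) h.
  by rewrite !nth_prefix // /sn => ->.
- move=> h; rewrite /Defs.prefix; apply/eq_in_map => t; rewrite mem_iota add0n => /andP[_ tn].
  by have := h (Ordinal tn); rewrite /sn /= => /eqP.
Qed.

Lemma consE n (i : 'I_k.+1) : (n <= k)%N -> cq i (pre (sn k) n) = (n <= i)%N.
Proof.
move=> nk; rewrite /consq size_prefix /ss prefix_sn_eq.
have ik := ltn_ord i; rewrite ltnS in ik.
apply/forallP/idP.
- move=> h; rewrite leqNgt; apply/negP => lt.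
  have := h (Ordinal lt); rewrite /= eqxx eq_sym; move/eqP.
  by move/esym/eqP; rewrite eqn_leq; lia.
- move=> h t; rewrite (ltn_eqF (leq_trans (ltn_ord t) h)).
  by rewrite (ltn_eqF (leq_trans (ltn_ord t) nk)).
Qed.

Lemma mqE n : (n <= k)%N -> mq (pre (sn k) n) = (k.+1 - n)%:R.
Proof.
move=> nk; rewrite /mm -cntge; apply: eq_bigr => i _; by rewrite consE.
Qed.

Lemma mqR n (i : 'I_k.+1) : (n < k)%N -> (n <= i)%N ->
  mq (rcons (pre (sn k) n) (ss i (size (pre (sn k) n)))) =
  if (n == i :> nat) then 1 else (k - n)%:R.
Proof.
move=> nk ni; rewrite /mm size_prefix.
transitivity (\sum_(j < k.+1) (if n == i :> nat then (n == j :> nat) else (n < j)%N)%:R : R).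
  apply: eq_bigr => j _; rewrite consR size_prefix consE ?(ltnW nk) //.
  rewrite /ss /sn; congr (_%:R); rewrite ltn_neqAle.
  case: (n =P j :> nat) => [<-|hj]; first by rewrite leqnn /=; case: (n == i :> nat).
  by case: (n == i :> nat); rewrite /= ?andbF ?andbT.
case: (n =P i :> nat) => _.
- by rewrite cnteq ltnS (ltnW nk).
- by rewrite cntge; congr (_%:R); lia.
Qed.

Lemma ctermE n : (n < k)%N ->
  cterm (fun i => pd R bool false (ss i)) n (sn k) = cc R ((k.+1 - n)%:R).
Proof.
move=> nk.
have HK : (0 < k.+1)%N by [].
have M1 : ((k.+1 - n)%:R : R) - 1 = (k - n)%:R.
  by rewrite subSn ?(ltnW nk) // -addn1 natrD addrK.
rewrite /cterm.
transitivity (\sum_(i < k.+1) ((n == i :> nat)%:R * (ln ((k.+1 - n)%:R : R) / (k.+1 - n)%:R)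
   + (n < i)%N%:R * (ln (((k.+1 - n)%:R : R) / (k - n)%:R) / (k.+1 - n)%:R))).
  apply: eq_bigr => i _; rewrite term_eq // consE ?(ltnW nk) // mqE ?(ltnW nk) //.
  case: (leqP n i) => ni.
  - rewrite mqR //; case: (n =P i :> nat) => [<-|h].
    + by rewrite ltnn /= mul0r addr0 !mul1r divr1 mulrC.
    + rewrite /= mul0r add0r; have -> : (n < i)%N by rewrite ltn_neqAle ni andbT; apply/eqP.
      by rewrite mul1r mul1r mulrC.
  - rewrite /= mul0r mul0r (gtn_eqF ni); have -> : (n < i)%N = false by lia.
    by rewrite !mul0r addr0.
rewrite big_split /= -!mulr_suml cnteq cntge ltnS (ltnW nk) subSS.
rewrite /cc M1.
have Mne : ((k.+1 - n)%:R : R) != 0 by rewrite pnatr_eq0 subn_eq0 -ltnNge ltnS ltnW.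
rewrite /=; ring.
Qed.
End F.

Theorem proposition2 (R : realType) (K : nat) (HK : (0 < K)%N) :
  exists (A : finType) (a0 : A) (nu : 'I_K -> probability (Ainf a0) R)
         (imu : 'I_K),
    injective nu /\
    (\int[nu imu]_w Cinf nu w > ((1 / 2) * (ln K%:R) ^+ 2 - 1)%:E)%E.
Proof.
case: K HK => [//|k] HK.
exists bool, false, (fun i => pd R bool false (ss k i)), ord_max.
split.
- move=> i j h.
  pose x := @Defs.prefix bool false (ss k i) i.+1.
  have := congr1 (fun m : probability (Ainf false) R => fine (m (cyl false x : set (Ainf false)))) h.
  have e1 := mcylE R bool false k.+1 (ss k) i x.
  have e2 := mcylE R bool false k.+1 (ss k) j x.
  rewrite /mcyl /= in e1 e2; rewrite /= e1 e2 /consq /x size_prefix eqxx.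
  rewrite /ss prefix_sn_eq.
  case: (i =P j) => // nij.
  have : [forall t : 'I_i.+1, (t == j :> nat) == (t == i :> nat)] = false.
    apply/negbTE/forallPn; exists ord_max; rewrite /= eqxx eq_sym.
    by apply/negP => /eqP hh; apply: nij; apply: val_inj; apply/eqP; rewrite -hh.
  by move=> ->; move/eqP; rewrite /= oner_eq0.
- rewrite /= /pd.
  rewrite (integral_dirac _ _ (Cinf_meas R bool false k.+1 HK (ss k))) //.
  rewrite diracT mul1e /Cinf.
  apply: (lt_le_trans _ (nneseries_lim_ge k _)); last first.
    by move=> n _ _; rewrite lee_fin cterm_ge0.
  rewrite sumEFin lte_fin big_rev_mkord subn0.
  rewrite (eq_bigr (fun i : 'I_k => cc R (i.+2%:R))); last first.
    move=> i _; have ik := ltn_ord i; rewrite /ss /= ctermE; last by lia.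
    by congr (cc R _%:R); lia.
  have := sumc R k; lra.
Qed.
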